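(* On every instance with largeness ratio $\theta$, the set $\chi_k$ of winners selected by the Oracle Mechanism satisfies $F(\chi_k)\ge(\tfrac12-\theta)F^\star$; i.e., the Oracle Mechanism has approximation ratio at least $\tfrac12-\theta$.
   Context: Sellers $S=\{1,\dots,n\}$ each own one indivisible item and have a cost $c_i\ge0$. The buyer's utility is a monotone submodular $F:2^S\to\mathbb R_{\ge0}$, budget $B>0$; $c(T)=\sum_{i\in T}c_i$. $F^\star=\max\{F(T):c(T)\le B\}>0$; the largeness ratio is $\theta=\max_{s}F(\{s\})/F^\star$. Greedy sequence $\chi(F)=\langle x_1,\dots,x_n\rangle$: with $\chi_0=\emptyset$, $\chi_i=\{x_1,\dots,x_i\}$, $x_i$ maximizes $(F(\chi_{i-1}\cup\{s\})-F(\chi_{i-1}))/c_s$ over $s\notin\chi_{i-1}$ (ratio $+\infty$ if $c_s=0$; ties arbitrary); $\partial_i=F(\chi_i)-F(\chi_{i-1})$. Oracle Mechanism (on the costs): compute $F^\star$, construct $\chi(F)$, let $k$ be the largest integer with $F(\chi_k)\le F^\star/2$, and declare $\chi_k$ the set of winners; each winner $x_j$ is paid $2r_{x_j}\partial_j$, where $r_s=B/F^\star_s$ and $F^\star_s$ is the optimum with seller $s$ removed. *)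

(* Defs.v *)
From HB Require Import structures.
From mathcomp Require Import all_boot all_order all_algebra.
From mathcomp Require Import constructive_ereal.
Set Implicit Arguments. Unset Strict Implicit. Unset Printing Implicit Defensive.
Import Order.TTheory GRing.Theory Num.Theory.
Local Open Scope ring_scope.

Section Defs.
Variables (R : realFieldType) (T : finType).

Definition cost (c : T -> R) (A : {set T}) : R := \sum_(i in A) c i.

Definition monotone_set_fun (F : {set T} -> R) : Prop :=
  forall A B : {set T}, A \subset B -> F A <= F B.

Definition submodular (F : {set T} -> R) : Prop :=
  forall A B : {set T}, F (A :|: B) + F (A :&: B) <= F A + F B.

(* F^* = max { F(A) : c(A) <= B }  (F >= 0, so max with 0 is harmless;
   the empty set is always feasible when B > 0) *)
Definition Fstar (F : {set T} -> R) (c : T -> R) (B : R) : R :=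
  \big[Num.max/0]_(A : {set T} | cost c A <= B) F A.

Definition largeness (F : {set T} -> R) (c : T -> R) (B : R) : R :=
  (\big[Num.max/0]_(s : T) F [set s]) / Fstar F c B.

Definition chi (xs : seq T) (i : nat) : {set T} := [set x in take i xs].

Definition gain_ratio (F : {set T} -> R) (c : T -> R) (P : {set T}) (s : T)
  : \bar R :=
  if c s == 0 then +oo%E else ((F (s |: P) - F P) / c s)%:E.

Definition greedy_seq (F : {set T} -> R) (c : T -> R) (xs : seq T) : Prop :=
  [/\ uniq xs, size xs = #|T| &
      forall (i : nat) (x0 : T), (i < #|T|)%N ->
        forall s : T, s \notin chi xs i ->
          (gain_ratio F c (chi xs i) s <= gain_ratio F c (chi xs i) (nth x0 xs i))%E].

Definition oracle_k (F : {set T} -> R) (c : T -> R) (B : R) (xs : seq T) (k : nat)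
  : Prop :=
  [/\ (k <= #|T|)%N, F (chi xs k) <= Fstar F c B / 2 &
      forall j : nat, (k < j <= #|T|)%N -> ~ (F (chi xs j) <= Fstar F c B / 2)].

End Defs.

(* Main.v *)
Require Import Defs.
From HB Require Import structures.
From mathcomp Require Import all_boot all_order all_algebra.
From mathcomp Require Import constructive_ereal.
From mathcomp Require Import ring lra.
Import Order.TTheory GRing.Theory Num.Theory.
Local Open Scope ring_scope.

Theorem lemma17 (R : realFieldType) (T : finType)
  (F : {set T} -> R) (c : T -> R) (B : R) (xs : seq T) (k : nat) :
  (forall i, 0 <= c i) ->
  0 < B ->
  (forall A, 0 <= F A) ->
  monotone_set_fun F ->
  submodular F ->
  0 < Fstar F c B ->
  greedy_seq F c xs ->
  oracle_k F c B xs k ->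
  (1 / 2 - largeness F c B) * Fstar F c B <= F (chi xs k).
Proof.
move=> hc hB hF0 hmon hsub hFs [hu hsz _] [hk hle hmax].
set Fs := Fstar F c B in hFs hle hmax *.
have hT : chi xs #|T| = setT.
  apply: (elimT eqP); rewrite eqEcard subsetT cardsT /chi -hsz take_size cardsE.
  move/card_uniqP: hu => ->.
  by rewrite leqnn.
have hFT : Fs <= F setT.
  by apply: bigmax_le => // A _; apply: hmon; apply: subsetT.
have hkn : (k < #|T|)%N.
  rewrite ltn_neqAle hk andbT; apply/negP => /eqP ek.
  move: hle; rewrite ek hT => h.
  have : Fs <= Fs / 2 by apply: le_trans h.
  lra.
have hk1 : ~ (F (chi xs k.+1) <= Fs / 2) by apply: hmax; rewrite ltnSn hkn.
have hk1' : Fs / 2 < F (chi xs k.+1) by rewrite ltNge; apply/negP.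
have hxn : (k < size xs)%N by rewrite hsz.
have [x0 _] : exists x0 : T, True by case: xs {hu hsz hle hmax hk1 hk1' hT} hxn => [|a l] //; exists a.
set x := nth x0 xs k.
have hchi : chi xs k.+1 = x |: chi xs k.
  apply/setP => y; rewrite /chi (take_nth x0 hxn) !inE mem_rcons in_cons.
  by [].
have hs := hsub (chi xs k) [set x].
have h0 := hF0 (chi xs k :&: [set x]).
have hM : F [set x] <= \big[Num.max/0]_(s : T) F [set s].
  exact: le_bigmax.
rewrite /largeness -/Fs.
move: hk1'; rewrite hchi setUC.
have -> : (1 / 2 - (\big[Num.max/0]_(s : T) F [set s]) / Fs) * Fs
   = Fs / 2 - \big[Num.max/0]_(s : T) F [set s].
  by field; rewrite gt_eqF.
lra.
Qed.
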